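(* Under either the overlap preference model or the cost preference model, any pair $\langle R,F\rangle$ consisting of a non-wasteful shortlisting rule $R$ and an exhaustive allocation rule $F$ is neither R-FSSP-P nor R-FSSP-A (and hence also not R-FSSP-O).
   Context: Let $\mathbb{P}=\{p_1,\dots,p_m\}$ be a finite set of projects, $c:\mathbb{P}\to\mathbb{N}$ a cost function with $c(P)=\sum_{p\in P}c(p)$, $B\in\mathbb{N}$ a budget with $c(p)\le B$ for all $p$; agents $\mathcal{N}=\{1,\dots,n\}$. Tie-breaking: for a nonempty family $\mathfrak{P}$ of subsets of $\mathbb{P}$, $T(\mathfrak{P})$ is the unique $P\in\mathfrak{P}$ such that for all $P'\in\mathfrak{P}\setminus\{P\}$ the lowest-index project of $(P\setminus P')\cup(P'\setminus P)$ lies in $P$. Greedy selection $\mathit{GREED}(P,\gg)$, for $P\subseteq\mathbb{P}$ and a strict linear order $\gg$ on $P$, examines projects in the order $\gg$ and selects a project iff doing so keeps the total cost of selected projects at most $B$. Shortlisting stage: a shortlisting instance is $\langle\mathbb{P},c,B\rangle$; a shortlisting profile is $\boldsymbol{P}=(P_1,\dots,P_n)$, $P_i\subseteq\mathbb{P}$, $\bigcup\boldsymbol{P}=P_1\cup\dots\cup P_n$; $(\boldsymbol{P}_{-i},P_i')$ replaces $P_i$ by $P_i'$; a shortlisting rule $R$ outputs $R(I,\boldsymbol{P})\subseteq\bigcup\boldsymbol{P}$. $R$ is non-wasteful if for every $I,\boldsymbol{P}$, either $c(R(I,\boldsymbol{P}))\ge B$ or $R(I,\boldsymbol{P})=\bigcup\boldsymbol{P}$.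 Each agent $i$ has an awareness set $C_i\subseteq\mathbb{P}$; $\boldsymbol{C}=(C_1,\dots,C_n)$. Allocation stage: an allocation instance is $\langle\mathcal{P},c,B\rangle$, $\mathcal{P}\subseteq\mathbb{P}$; a profile $\boldsymbol{A}=(A_1,\dots,A_n)$, $A_i\subseteq\mathcal{P}$; $A\subseteq\mathcal{P}$ is feasible if $c(A)\le B$ and exhaustive if it is feasible and there is no $p\in\mathcal{P}\setminus A$ with $c(A\cup\{p\})\le B$; an allocation rule $F$ outputs a feasible $F(I,\boldsymbol{A})$, and is exhaustive if its output is always exhaustive. Preferences: each agent $i$ has a strict linear order $\rhd_i$ on $\mathbb{P}$; $\mathit{top}_i(\mathcal{P})=\mathit{GREED}(\mathcal{P},\rhd_i|_{\mathcal{P}})$, $\boldsymbol{top}(\mathcal{P})=(\mathit{top}_1(\mathcal{P}),\dots,\mathit{top}_n(\mathcal{P}))$. For $P\subseteq\mathbb{P}$: overlap model $A\succeq_P A'$ iff $|A\cap P|\ge|A'\cap P|$; cost model $A\succeq_P A'$ iff $c(A\cap P)\ge c(A'\cap P)$; $\succ_P$ its strict part. $\mathit{best}(\succ,\mathfrak{P})$ is the set of elements of $\mathfrak{P}$ undominated w.r.t. $\succ$. Best response: for $I=\langle\mathcal{P},c,B\rangle$, profile $\boldsymbol{A}$, agent $i$: $A_i^\star(I,\boldsymbol{A})=T(\mathit{best}(\succ_{\mathit{top}_i(\mathcal{P})},\{F(I,(\boldsymbol{A}_{-i},A_i'))\mid A_i'\subseteq\mathcal{P}\}))$ and $F^\star(I,\boldsymbol{A})=F(I,(\boldsymbol{A}_{-i},A_i^\star(I,\boldsymbol{A})))$.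 Manipulation: given $R,F$, shortlisting instance $I_1$, profile $\boldsymbol{P}$, agent $i$, $P_i'\subseteq\mathbb{P}$, let $\mathcal{P}=R(I_1,\boldsymbol{P})$, $\mathcal{P}'=R(I_1,(\boldsymbol{P}_{-i},P_i'))$, $I_2=\langle\mathcal{P},c,B\rangle$, $I_2'=\langle\mathcal{P}',c,B\rangle$, $Q=\mathit{top}_i(\mathcal{P}\cup\mathcal{P}')$. $P_i'$ is a successful pessimistic manipulation if for all profiles $\boldsymbol{A}$ on $\mathcal{P}$ and $\boldsymbol{A}'$ on $\mathcal{P}'$, $F^\star(I_2',\boldsymbol{A}')\succeq_Q F^\star(I_2,\boldsymbol{A})$, strictly for at least one pair; successful optimistic if for some $\boldsymbol{A}$ on $\mathcal{P}$ and some $\boldsymbol{A}'$ on $\mathcal{P}'$, $F^\star(I_2',\boldsymbol{A}')\succ_Q F^\star(I_2,\boldsymbol{A})$; successful anticipative if $F^\star(I_2',\boldsymbol{top}(\mathcal{P}'))\succ_Q F^\star(I_2,\boldsymbol{top}(\mathcal{P}))$. R-FSSP: for a preference model, $\langle R,F\rangle$ is R-FSSP w.r.t. a manipulation type if for every shortlisting instance, awareness profile $\boldsymbol{C}$, shortlisting profile $\boldsymbol{P}$ with $P_{i'}\subseteq C_{i'}$ for all $i'$, and agent $i$, there is no $P_i'\subseteq C_i$ such that submitting $P_i'$ instead of $\mathit{top}_i(C_i)$ (i.e., going from $(\boldsymbol{P}_{-i},\mathit{top}_i(C_i))$ to $(\boldsymbol{P}_{-i},P_i')$) is a successful manipulation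 of that type. R-FSSP-P, R-FSSP-O, R-FSSP-A refer to pessimistic, optimistic, anticipative manipulation. *)

(* Defs.v *)
(* Projects are 'I_m (index order = ordinal order),
   agents are 'I_n. *)
From mathcomp Require Import all_boot.
Set Implicit Arguments. Unset Strict Implicit. Unset Printing Implicit Defensive.

Definition cost (m : nat) (c : 'I_m -> nat) (S : {set 'I_m}) : nat :=
  \sum_(p in S) c p.

Definition valid_inst (m : nat) (c : 'I_m -> nat) (B : nat) : Prop :=
  forall p, c p <= B.

Definition upd (n : nat) (T : Type) (A : 'I_n -> T) (i : 'I_n) (x : T) : 'I_n -> T :=
  fun j => if j == i then x else A j.

(* a strict linear order on the projects is given by the list of all
   projects from most to least preferred *)
Definition is_pref (m : nat) (s : seq 'I_m) : Prop := perm_eq s (enum 'I_m).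

Definition greed (m : nat) (c : 'I_m -> nat) (B : nat) (s : seq 'I_m) : {set 'I_m} :=
  foldl (fun acc p => if cost c (p |: acc) <= B then p |: acc else acc) set0 s.

Definition top (m : nat) (c : 'I_m -> nat) (B : nat) (pref : seq 'I_m)
  (P : {set 'I_m}) : {set 'I_m} :=
  greed c B [seq p <- pref | p \in P].

Definition lex_beats (m : nat) (P P' : {set 'I_m}) : bool :=
  [exists p : 'I_m, [&& p \in P, p \notin P' &
     [forall q : 'I_m, (nat_of_ord q < nat_of_ord p)%N ==> ((q \in P) == (q \in P'))]]].

Definition tiebreak (m : nat) (fam : {set {set 'I_m}}) : {set 'I_m} :=
  odflt set0 [pick P in fam | [forall P' in fam, (P' != P) ==> lex_beats P P']].

Inductive pmodel := Overlap | CostModel.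

Definition weak_pref (M : pmodel) (m : nat) (c : 'I_m -> nat) (Q A A' : {set 'I_m}) : bool :=
  match M with
  | Overlap => #|A' :&: Q| <= #|A :&: Q|
  | CostModel => cost c (A' :&: Q) <= cost c (A :&: Q)
  end.

Definition strict_pref (M : pmodel) (m : nat) (c : 'I_m -> nat) (Q A A' : {set 'I_m}) : bool :=
  weak_pref M c Q A A' && ~~ weak_pref M c Q A' A.

Definition best (M : pmodel) (m : nat) (c : 'I_m -> nat) (Q : {set 'I_m})
  (fam : {set {set 'I_m}}) : {set {set 'I_m}} :=
  [set A in fam | ~~ [exists A' in fam, strict_pref M c Q A' A]].

(* A shortlisting rule maps an instance <'I_m, c, B> and a profile
   to a set of projects; an allocation rule maps an allocation instance
   <Pc, c, B> (Pc a subset of 'I_m) and a profile to a set of projects. *)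
Definition shortlisting_rule :=
  forall (m n : nat), ('I_m -> nat) -> nat -> ('I_n -> {set 'I_m}) -> {set 'I_m}.
Definition allocation_rule :=
  forall (m n : nat), ('I_m -> nat) -> nat -> {set 'I_m} -> ('I_n -> {set 'I_m}) -> {set 'I_m}.

Definition profile_on (m n : nat) (Pc : {set 'I_m}) (A : 'I_n -> {set 'I_m}) : Prop :=
  forall j, A j \subset Pc.

Definition is_shortlisting_rule (R : shortlisting_rule) : Prop :=
  forall m n (c : 'I_m -> nat) B (P : 'I_n -> {set 'I_m}),
    valid_inst c B -> R m n c B P \subset \bigcup_j P j.

Definition non_wasteful (R : shortlisting_rule) : Prop :=
  forall m n (c : 'I_m -> nat) B (P : 'I_n -> {set 'I_m}),
    valid_inst c B ->
    B <= cost c (R m n c B P) \/ R m n c B P = \bigcup_j P j.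

Definition feasible (m : nat) (c : 'I_m -> nat) (B : nat) (Pc S : {set 'I_m}) : Prop :=
  S \subset Pc /\ cost c S <= B.

Definition exhaustive_set (m : nat) (c : 'I_m -> nat) (B : nat) (Pc S : {set 'I_m}) : Prop :=
  feasible c B Pc S /\ (forall p, p \in Pc -> p \notin S -> B < cost c (p |: S)).

Definition is_allocation_rule (F : allocation_rule) : Prop :=
  forall m n (c : 'I_m -> nat) B Pc (A : 'I_n -> {set 'I_m}),
    valid_inst c B -> profile_on Pc A -> feasible c B Pc (F m n c B Pc A).

Definition exhaustive (F : allocation_rule) : Prop :=
  forall m n (c : 'I_m -> nat) B Pc (A : 'I_n -> {set 'I_m}),
    valid_inst c B -> profile_on Pc A -> exhaustive_set c B Pc (F m n c B Pc A).

Definition best_response (M : pmodel) (F : allocation_rule) (m n : nat)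
  (c : 'I_m -> nat) (B : nat) (prefs : 'I_n -> seq 'I_m) (Pc : {set 'I_m})
  (A : 'I_n -> {set 'I_m}) (i : 'I_n) : {set 'I_m} :=
  tiebreak (best M c (top c B (prefs i) Pc)
              [set F m n c B Pc (upd A i X) | X in powerset Pc]).

Definition Fstar (M : pmodel) (F : allocation_rule) (m n : nat)
  (c : 'I_m -> nat) (B : nat) (prefs : 'I_n -> seq 'I_m) (Pc : {set 'I_m})
  (A : 'I_n -> {set 'I_m}) (i : 'I_n) : {set 'I_m} :=
  F m n c B Pc (upd A i (best_response M F c B prefs Pc A i)).

Inductive manip_kind := Pessimistic | Optimistic | Anticipative.

Definition successful (k : manip_kind) (M : pmodel) (R : shortlisting_rule)
  (F : allocation_rule) (m n : nat) (c : 'I_m -> nat) (B : nat)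
  (prefs : 'I_n -> seq 'I_m) (P : 'I_n -> {set 'I_m}) (i : 'I_n)
  (Pi' : {set 'I_m}) : Prop :=
  let Pc := R m n c B P in
  let Pc' := R m n c B (upd P i Pi') in
  let Q := top c B (prefs i) (Pc :|: Pc') in
  match k with
  | Pessimistic =>
      (forall A A', profile_on Pc A -> profile_on Pc' A' ->
         weak_pref M c Q (Fstar M F c B prefs Pc' A' i) (Fstar M F c B prefs Pc A i))
      /\ (exists A A', profile_on Pc A /\ profile_on Pc' A' /\
         strict_pref M c Q (Fstar M F c B prefs Pc' A' i) (Fstar M F c B prefs Pc A i))
  | Optimistic =>
      exists A A', profile_on Pc A /\ profile_on Pc' A' /\
         strict_pref M c Q (Fstar M F c B prefs Pc' A' i) (Fstar M F c B prefs Pc A i)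
  | Anticipative =>
      strict_pref M c Q
        (Fstar M F c B prefs Pc' (fun j => top c B (prefs j) Pc') i)
        (Fstar M F c B prefs Pc (fun j => top c B (prefs j) Pc) i)
  end.

Definition R_FSSP (k : manip_kind) (M : pmodel) (R : shortlisting_rule)
  (F : allocation_rule) : Prop :=
  forall (m n : nat) (c : 'I_m -> nat) (B : nat), valid_inst c B ->
  forall (prefs : 'I_n -> seq 'I_m), (forall j, is_pref (prefs j)) ->
  forall (C P : 'I_n -> {set 'I_m}), (forall j, P j \subset C j) ->
  forall (i : 'I_n) (Pi' : {set 'I_m}), Pi' \subset C i ->
    ~ successful k M R F c B prefs (upd P i (top c B (prefs i) (C i))) i Pi'.

(* Main.v *)
Require Import Defs.
From mathcomp Require Import all_boot zify.
Set Implicit Arguments. Unset Strict Implicit. Unset Printing Implicit Defensive.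

Lemma cost_sub m (c : 'I_m -> nat) (S T : {set 'I_m}) : S \subset T -> cost c S <= cost c T.
Proof.
move=> ST; rewrite /cost [X in _ <= X](big_setID S).
by rewrite (setIidPr ST) leq_addr.
Qed.

Lemma costU1 m (c : 'I_m -> nat) p (S : {set 'I_m}) : p \notin S -> cost c (p |: S) = c p + cost c S.
Proof. by move=> h; rewrite /cost big_setU1. Qed.

Lemma exh_forced m (c : 'I_m -> nat) B (Pc S : {set 'I_m}) :
  exhaustive_set c B Pc S -> cost c Pc <= B -> S = Pc.
Proof.
move=> [[sub _] ex] cP; apply/eqP; rewrite eqEsubset sub /=.
apply/subsetP => p pP; apply/negPn/negP => pS.
have := ex p pP pS; rewrite ltnNge; move/negP; apply.
apply: leq_trans cP; apply: cost_sub; by rewrite subUset sub1set pP.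
Qed.

Lemma pos_forced m (c : 'I_m -> nat) (S U : {set 'I_m}) :
  (forall p, 0 < c p) -> S \subset U -> cost c U <= cost c S -> S = U.
Proof.
move=> pos sub cU; apply/eqP; rewrite eqEsubset sub /=.
apply/subsetP => p pU; apply/negPn/negP => pS.
have : cost c (p |: S) <= cost c U by apply: cost_sub; rewrite subUset sub1set pU.
rewrite costU1 //; have := pos p; move: cU; clear; lia.
Qed.

Lemma greed_sub m (c : 'I_m -> nat) B s : greed c B s \subset [set p | p \in s].
Proof.
rewrite /greed.
suff H : forall acc, foldl (fun acc p => if cost c (p |: acc) <= B then p |: acc else acc) acc s
   \subset acc :|: [set p | p \in s].
  by apply: subset_trans (H set0) _; rewrite set0U.
elim: s => [|a s IH] acc /=; first by rewrite subsetUl.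
apply: subset_trans (IH _) _; rewrite subUset; apply/andP; split.
  case: ifP => _; last by rewrite subsetUl.
  rewrite subUset sub1set !inE eqxx /= orbT /=; by rewrite subsetUl.
by apply/subsetP => q; rewrite !inE => ->; rewrite !orbT.
Qed.

Lemma top_sub m (c : 'I_m -> nat) B pref P : top c B pref P \subset P.
Proof.
apply: subset_trans (greed_sub _ _ _) _; apply/subsetP => q; rewrite inE mem_filter.
by case/andP.
Qed.

Lemma br_sub M F m n (c : 'I_m -> nat) B prefs Pc (A : 'I_n -> {set 'I_m}) i :
  is_allocation_rule F -> valid_inst c B -> profile_on Pc A ->
  best_response M F c B prefs Pc A i \subset Pc.
Proof.
move=> aF v pA; rewrite /best_response /tiebreak.
case: pickP => [P /andP[Pin _]|_] /=; last exact: sub0set.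
move: Pin; rewrite inE => /andP[/imsetP[X XP ->] _].
have pX : profile_on Pc (upd A i X).
  move=> j; rewrite /upd; case: (j == i) => //; by rewrite -powersetE.
by case: (aF _ _ c B Pc _ v pX).
Qed.

Lemma Fstar_exh M F m n (c : 'I_m -> nat) B prefs Pc (A : 'I_n -> {set 'I_m}) i :
  is_allocation_rule F -> exhaustive F -> valid_inst c B -> profile_on Pc A ->
  exhaustive_set c B Pc (Fstar M F c B prefs Pc A i).
Proof.
move=> aF eF v pA; apply: eF => // j; rewrite /upd; case: (j == i) => //.
exact: br_sub.
Qed.
Definition pz : 'I_3 := @Ordinal 3 0 erefl.
Definition px : 'I_3 := @Ordinal 3 1 erefl.
Definition pw : 'I_3 := @Ordinal 3 2 erefl.
Definition cc (p : 'I_3) : nat := if val p == 1 then 2 else 1.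
Definition a0 : 'I_2 := @Ordinal 2 0 erefl.
Definition a1 : 'I_2 := @Ordinal 2 1 erefl.
Definition prefs0 : 'I_2 -> seq 'I_3 := fun _ => enum 'I_3.
Definition CC : 'I_2 -> {set 'I_3} := fun j => if j == a0 then [set px; pw] else [set pz].
Definition PP : 'I_2 -> {set 'I_3} := fun j => if j == a0 then set0 else [set pz].

Lemma enum3 : enum 'I_3 = [:: pz; px; pw].
Proof. by apply: (inj_map val_inj); rewrite val_enum_ord. Qed.

Lemma valid_cc : valid_inst cc 2.
Proof. by move=> p; rewrite /cc; case: ifP. Qed.

Lemma pos_cc p : 0 < cc p.
Proof. by rewrite /cc; case: ifP. Qed.


Lemma cost10 m (c : 'I_m -> nat) p : cost c (p |: set0) = c p.
Proof. by rewrite setU0 /cost big_set1. Qed.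

Lemma top0 : top cc 2 (prefs0 a0) (CC a0) = [set px].
Proof.
rewrite /top /prefs0 enum3 /CC /= !inE /= /greed /=.
rewrite cost10 /= costU1 ?inE // cost10 /=.
by rewrite setU0.
Qed.

Lemma two_case (j : 'I_2) : j = a0 \/ j = a1.
Proof. case: j => [[|[|k]] h]; [left|right|]; try exact: val_inj. by []. Qed.

Lemma union_man :
  \bigcup_j upd (upd PP a0 (top cc 2 (prefs0 a0) (CC a0))) a0 [set pw] j = [set pz; pw].
Proof.
apply/eqP; rewrite eqEsubset; apply/andP; split.
  apply/bigcupsP => j _; rewrite /upd; case: (two_case j) => ->; rewrite /=.
    by rewrite sub1set !inE.
  by rewrite /PP /= sub1set !inE.
rewrite subUset !sub1set; apply/andP; split.
  apply/bigcupP; exists a1 => //; by rewrite /upd /PP /= inE.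
apply/bigcupP; exists a0 => //; by rewrite /upd /= inE.
Qed.

Lemma union_tru :
  \bigcup_j upd PP a0 (top cc 2 (prefs0 a0) (CC a0)) j \subset [set pz; px].
Proof.
apply/bigcupsP => j _; rewrite /upd; case: (two_case j) => ->; rewrite /=.
  by rewrite top0 sub1set !inE.
by rewrite /PP /= sub1set !inE.
Qed.

Lemma costzw : cost cc [set pz; pw] = 2.
Proof. by rewrite costU1 ?inE // /cost big_set1. Qed.

Lemma Qcomp (Pc : {set 'I_3}) :
  top cc 2 (prefs0 a0) (Pc :|: [set pz; pw]) = [set pz; pw].
Proof.
rewrite /top /prefs0 enum3 /= !inE !eqxx /= !orbT /=.
have -> : (px == pw) = false by [].
rewrite orbF.
case: (px \in Pc) => /=; rewrite /greed /=.
{ rewrite !cost10 /=.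
  rewrite [cost cc (px |: _)]costU1; last by rewrite !inE.
  rewrite !cost10 /= costU1; last by rewrite !inE.
  rewrite cost10 /=.
  by apply/setP => p; rewrite !inE orbF orbC. }
rewrite cost10 /= costU1; last by rewrite !inE.
rewrite cost10 /=.
by apply/setP => p; rewrite !inE orbF orbC.
Qed.


Lemma strictQ M (S : {set 'I_3}) : S \subset [set pz; px] ->
  strict_pref M cc [set pz; pw] [set pz; pw] S.
Proof.
move=> hS.
have SQ : S :&: [set pz; pw] \subset [set pz].
  apply/subsetP => p; rewrite inE => /andP[/(subsetP hS)].
  rewrite !inE => /orP[/eqP->|/eqP->] //.
have zw : (pz != pw) by [].
case: M; rewrite /strict_pref /weak_pref setIid.
  rewrite cards2 zw /=.
  have := subset_leq_card SQ; rewrite cards1 => h.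
  by rewrite (leq_trans h) //= -leqNgt.
rewrite costzw.
have := cost_sub cc SQ; rewrite /cost big_set1 /cc /= -/(cost cc _) => h.
by rewrite (leq_trans h) //= -ltnNge ltnS.
Qed.

Lemma key k M R F : is_shortlisting_rule R -> non_wasteful R ->
  is_allocation_rule F -> exhaustive F ->
  successful k M R F cc 2 prefs0 (upd PP a0 (top cc 2 (prefs0 a0) (CC a0))) a0 [set pw].
Proof.
move=> sR nR aF eF.
set Pt := upd PP a0 _.
rewrite /successful.
set Pc := R 3 2 cc 2 Pt.
set Pc' := R 3 2 cc 2 (upd Pt a0 [set pw]).
have hPc' : Pc' = [set pz; pw].
  case: (nR 3 2 cc 2 (upd Pt a0 [set pw]) valid_cc) => h.
    rewrite -union_man; apply: pos_forced; first exact: pos_cc.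
      exact: sR valid_cc.
    by rewrite union_man costzw.
  by rewrite /Pc' h union_man.
have hPc : Pc \subset [set pz; px].
  apply: subset_trans (sR _ _ _ _ _ valid_cc) _; exact: union_tru.
have hQ : top cc 2 (prefs0 a0) (Pc :|: Pc') = [set pz; pw] by rewrite hPc' Qcomp.
rewrite hQ.
have hout' : forall A', profile_on Pc' A' -> Fstar M F cc 2 prefs0 Pc' A' a0 = [set pz; pw].
  move=> A' pA; rewrite -hPc'; apply: exh_forced; first exact: Fstar_exh valid_cc pA.
  by rewrite hPc' costzw.
have hout : forall A, profile_on Pc A -> Fstar M F cc 2 prefs0 Pc A a0 \subset [set pz; px].
  move=> A pA; apply: subset_trans hPc.
  by case: (Fstar_exh M prefs0 a0 aF eF valid_cc pA) => [[]].
have p0 : forall P : {set 'I_3}, profile_on P (fun _ : 'I_2 => set0).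
  by move=> P j; exact: sub0set.
case: k.
- split.
    move=> A A' pA pA'; rewrite hout' //.
    by case/andP: (strictQ M (hout A pA)).
  exists (fun _ => set0), (fun _ => set0); do 2 (split; first exact: p0).
  rewrite hout' //; exact: strictQ (hout _ (p0 _)).
- exists (fun _ => set0), (fun _ => set0); do 2 (split; first exact: p0).
  rewrite hout' //; exact: strictQ (hout _ (p0 _)).
- rewrite hout'; last by move=> j; exact: top_sub.
  apply: strictQ; apply: hout; move=> j; exact: top_sub.
Qed.

Lemma notF k M R F : is_shortlisting_rule R -> non_wasteful R ->
  is_allocation_rule F -> exhaustive F -> ~ R_FSSP k M R F.
Proof.
move=> sR nR aF eF H.
apply: (H 3 2 cc 2 valid_cc prefs0 (fun _ => perm_refl _) CC PP _ a0 [set pw]).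
- by move=> j; rewrite /PP /CC; case: (j == a0) => //; exact: sub0set.
- by rewrite /CC /= sub1set !inE orbT.
- exact: key.
Qed.

Theorem theorem1 :
  forall (M : pmodel) (R : shortlisting_rule) (F : allocation_rule),
    is_shortlisting_rule R -> non_wasteful R ->
    is_allocation_rule F -> exhaustive F ->
    ~ R_FSSP Pessimistic M R F /\ ~ R_FSSP Anticipative M R F /\
    ~ R_FSSP Optimistic M R F.
Proof.
move=> M R F sR nR aF eF; split; [|split]; exact: notF.
Qed.
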